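(* Let $\Gamma$ be a distance-regular graph with diameter $D\ge 3$, valency $k$ and $a_1\neq 0$. Let $\sigma_0,\sigma_1,\dots,\sigma_D$ and $\varepsilon$ be real numbers with $\sigma_0=1$; write $\sigma=\sigma_1$. Consider the following conditions. Condition A: $\varepsilon\neq -1$, and for $1\le i\le D-1$, $$a_i=g\,\frac{(\sigma_{i+1}-\sigma\sigma_i)(\sigma_{i-1}-\sigma\sigma_i)}{(\sigma_{i+1}-\sigma_i)(\sigma_{i-1}-\sigma_i)},\qquad g=\frac{(\varepsilon-1)(1-\sigma_2)}{(\sigma^2-\sigma_2)(1-\varepsilon\sigma)},$$ with all denominators appearing here nonzero. Condition B: for $1\le i\le D-1$, $$b_i(\sigma_{i-1}-\sigma_{i+1})=h\,\frac{(\sigma_{i-1}-\sigma\sigma_i)(\sigma_{i+1}-\varepsilon\sigma_i)}{\sigma_{i+1}-\sigma_i},\qquad h=\frac{(1-\sigma)(1-\sigma_2)}{(\sigma^2-\sigma_2)(1-\varepsilon\sigma)},$$ with all denominators appearing here nonzero. Condition C: $k=h\dfrac{\sigma-\varepsilon}{\sigma-1}$ and for $1\le i\le D-1$, $$c_i(\sigma_{i+1}-\sigma_{i-1})=h\,\frac{(\sigma_{i+1}-\sigma\sigma_i)(\sigma_{i-1}-\varepsilon\sigma_i)}{\sigma_{i-1}-\sigma_i},$$ with $h$ as in Condition B, and all denominators appearing here (including that of $h$) nonzero. Then the following are equivalent: (i) $\sigma_0,\dots,\sigma_D$ is a tight nontrivial pseudo cosine sequence and $\varepsilon$ is its auxiliary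 parameter; (ii) $\sigma_0,\dots,\sigma_D$ is a nontrivial pseudo cosine sequence and $\sigma_0,\dots,\sigma_D,\varepsilon$ satisfy Condition A; (iii) $\sigma_0,\dots,\sigma_D,\varepsilon$ satisfy both Condition A and Condition B; (iv) $\sigma_0,\dots,\sigma_D,\varepsilon$ satisfy both Condition A and Condition C.
   Context: $\Gamma$ is a finite connected undirected graph without loops or multiple edges, distance-regular with diameter $D$, intersection numbers $a_i,b_i,c_i$ ($c_0=0$, $b_D=0$, $c_1=1$), valency $k=b_0$, $c_i+a_i+b_i=k$. For $\theta\in\mathbb{R}$ the pseudo cosine sequence for $\theta$ is the sequence of reals $\sigma_0,\dots,\sigma_D$ with $\sigma_0=1$ and $c_i\sigma_{i-1}+a_i\sigma_i+b_i\sigma_{i+1}=\theta\sigma_i$ for $0\le i\le D-1$; then $\theta=k\sigma_1$. The trivial pseudo cosine sequence is the one for $\theta=k$ (all terms equal $1$); a pseudo cosine sequence is nontrivial if $\sigma_1\neq 1$. Pseudo cosine sequences $\sigma_i$, $\rho_i$ form a tight pair if $(\sigma_i\rho_i)_{i=0}^D$ is a pseudo cosine sequence. For a tight pair of nontrivial pseudo cosine sequences, an auxiliary parameter is a real $\varepsilon$ with $\sigma_i\rho_i-\sigma_{i-1}\rho_{i-1}=\varepsilon(\sigma_{i-1}\rho_i-\sigma_i\rho_{i-1})$ for $1\le i\le D$. When $a_1\neq0$, a nontrivial pseudo cosine sequence $\sigma_0,\dots,\sigma_D$ is called tight if there exists a nontrivial pseudo cosine sequence $\rho_0,\dots,\rho_D$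 such that the two form a tight pair; the auxiliary parameter of $\sigma_0,\dots,\sigma_D$ is the auxiliary parameter of this tight pair (which is uniquely determined in this situation). *)

(* Defs.v *)
From HB Require Import structures.
From mathcomp Require Import all_boot all_order all_algebra.
Set Implicit Arguments. Unset Strict Implicit. Unset Printing Implicit Defensive.
Import Order.TTheory GRing.Theory Num.Theory.

Section Graph.
Variables (V : finType) (e : rel V).

Definition simple_graph : Prop := symmetric e /\ irreflexive e.
Definition connected_graph : Prop := forall x y : V, connect e x y.

Fixpoint within (n : nat) (x y : V) : bool :=
  match n with
  | 0 => x == y
  | n'.+1 => within n' x y || [exists z, within n' x z && e z y]
  end.

(* path-length distance (correct for connected graphs: every distance is < #|V|) *)
Definition dist (x y : V) : nat := find (fun n => within n x y) (iota 0 #|V|).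

Definition diameter : nat := \max_(x : V) \max_(y : V) dist x y.

Definition distance_regular (c a b : nat -> nat) : Prop :=
  forall x y : V,
    [/\ #|[set z | e x z & (dist z y).+1 == dist x y]| = c (dist x y),
        #|[set z | e x z & dist z y == dist x y]| = a (dist x y) &
        #|[set z | e x z & dist z y == (dist x y).+1]| = b (dist x y)].
End Graph.

Local Open Scope ring_scope.
Section PCS.
Variables (R : realFieldType) (D : nat) (c a b : nat -> nat).

(* sigma is a pseudo cosine sequence for theta (only sigma_0..sigma_D matter) *)
Definition pcs_for (theta : R) (s : nat -> R) : Prop :=
  s 0%N = 1 /\
  forall i : nat, (i < D)%N ->
    (c i)%:R * s i.-1 + (a i)%:R * s i + (b i)%:R * s i.+1 = theta * s i.

Definition pcs (s : nat -> R) : Prop := exists theta : R, pcs_for theta s.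

Definition nontrivial_pcs (s : nat -> R) : Prop := pcs s /\ s 1%N != 1.

Definition tight_pair (s r : nat -> R) : Prop :=
  [/\ pcs s, pcs r & pcs (fun i => s i * r i)].

Definition aux_param (s r : nat -> R) (eps : R) : Prop :=
  forall i : nat, (1 <= i <= D)%N ->
    s i * r i - s i.-1 * r i.-1 = eps * (s i.-1 * r i - s i * r i.-1).

Definition tight_with_aux (s : nat -> R) (eps : R) : Prop :=
  nontrivial_pcs s /\
  exists r : nat -> R, [/\ nontrivial_pcs r, tight_pair s r & aux_param s r eps].

Definition gA (s : nat -> R) (eps : R) : R :=
  (eps - 1) * (1 - s 2%N) / ((s 1%N ^+ 2 - s 2%N) * (1 - eps * s 1%N)).

Definition hB (s : nat -> R) (eps : R) : R :=
  (1 - s 1%N) * (1 - s 2%N) / ((s 1%N ^+ 2 - s 2%N) * (1 - eps * s 1%N)).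

Definition condA (s : nat -> R) (eps : R) : Prop :=
  [/\ eps != -1,
      s 1%N ^+ 2 - s 2%N != 0,
      1 - eps * s 1%N != 0 &
      forall i : nat, (1 <= i <= D.-1)%N ->
        [/\ s i.+1 - s i != 0, s i.-1 - s i != 0 &
        (a i)%:R = gA s eps *
          ((s i.+1 - s 1%N * s i) * (s i.-1 - s 1%N * s i)) /
          ((s i.+1 - s i) * (s i.-1 - s i))]].

Definition condB (s : nat -> R) (eps : R) : Prop :=
  [/\ s 1%N ^+ 2 - s 2%N != 0,
      1 - eps * s 1%N != 0 &
      forall i : nat, (1 <= i <= D.-1)%N ->
        s i.+1 - s i != 0 /\
        (b i)%:R * (s i.-1 - s i.+1) = hB s eps *
          ((s i.-1 - s 1%N * s i) * (s i.+1 - eps * s i)) / (s i.+1 - s i)].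

Definition condC (s : nat -> R) (eps : R) : Prop :=
  [/\ s 1%N ^+ 2 - s 2%N != 0,
      1 - eps * s 1%N != 0,
      s 1%N - 1 != 0,
      (b 0%N)%:R = hB s eps * (s 1%N - eps) / (s 1%N - 1) &
      forall i : nat, (1 <= i <= D.-1)%N ->
        s i.-1 - s i != 0 /\
        (c i)%:R * (s i.+1 - s i.-1) = hB s eps *
          ((s i.+1 - s 1%N * s i) * (s i.-1 - eps * s i)) / (s i.-1 - s i)].
End PCS.

(* Main.v *)
Require Import Defs.
From mathcomp Require Import all_boot all_order all_algebra.
From mathcomp Require Import ring lra zify.
Set Implicit Arguments. Unset Strict Implicit. Unset Printing Implicit Defensive.
Import Order.TTheory GRing.Theory Num.Theory.

Section G.
Variables (V : finType) (e : rel V).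
Hypotheses (Hs : simple_graph e) (Hc : connected_graph e).

Lemma within_mono n m x y : n <= m -> within e n x y -> within e m x y.
Proof using Hs Hc.
elim: m => [|m IH]; first by rewrite leqn0 => /eqP ->.
rewrite leq_eqVlt => /orP[/eqP -> //|hn] H /=; by rewrite IH.
Qed.

Lemma within_lstep n x z y : e x z -> within e n z y -> within e n.+1 x y.
Proof using Hs Hc.
move=> exz; elim: n y => [|n IH] y /=.
  by move/eqP<-; rewrite orbC; apply/orP; left; apply/existsP; exists x; rewrite /= eqxx.
case/orP=> [H|/existsP[w /andP[H1 H2]]].
  by have := IH _ H; rewrite [within _ n.+1 _ _]/= => ->.
apply/orP; right; apply/existsP; exists w; rewrite H2 andbT; exact: IH.
Qed.

Lemma within_sym n x y : within e n x y -> within e n y x.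
Proof using Hs Hc.
elim: n x y => [|n IH] x y /=; first by rewrite eq_sym.
case/orP=> [H|/existsP[w /andP[H1 H2]]].
  by rewrite IH.
apply: (within_lstep (z:=w)); first by rewrite (proj1 Hs).
exact: IH.
Qed.

Lemma within_path x p : path e x p -> within e (size p) x (last x p).
Proof using Hs Hc.
elim: p x => [|y p IH] x /=; first by rewrite eqxx.
case/andP=> exy hp; exact: within_lstep exy (IH _ hp).
Qed.

Lemma within_card x y : within e #|V|.-1 x y.
Proof using Hs Hc.
have /connectP[p hp ->] := Hc x y.
case: (shortenP hp) => p' hp' hu _.
apply: within_mono (within_path hp').
have := max_card (mem (x :: p')); rewrite (card_uniqP hu) /=. lia.
Qed.

Lemma dist_spec x y : within e (dist e x y) x y /\ forall j, j < dist e x y -> ~~ within e j x y.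
Proof using Hs Hc.
have hn : 0 < #|V| by apply/card_gt0P; exists x.
have hh : has (fun n => within e n x y) (iota 0 #|V|).
  apply/hasP; exists #|V|.-1; last exact: within_card.
  rewrite mem_iota; lia.
have hf := hh; rewrite has_find size_iota in hf.
split.
  have := nth_find 0 hh; rewrite nth_iota //.
move=> j hj; have := before_find 0 hj; rewrite nth_iota ?add0n => [->//|].
rewrite /dist in hj; lia.
Qed.

Lemma dist_le n x y : (dist e x y <= n) = within e n x y.
Proof using Hs Hc.
have [h1 h2] := dist_spec x y.
apply/idP/idP => [H|H]; first exact: within_mono H h1.
rewrite leqNgt; apply/negP => H'; by move: (h2 _ H'); rewrite H.
Qed.

Lemma dist_sym x y : dist e x y = dist e y x.
Proof using Hs Hc.
apply/eqP; rewrite eqn_leq !dist_le; apply/andP; split; apply: within_sym; by rewrite -dist_le.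
Qed.

Lemma dist0 x y : (dist e x y == 0) = (x == y).
Proof using Hs Hc. by rewrite -leqn0 dist_le. Qed.

Lemma distxx x : dist e x x = 0.
Proof using Hs Hc. by apply/eqP; rewrite dist0. Qed.

Lemma dist1 x y : (dist e x y == 1) = e x y.
Proof using Hs Hc.
apply/idP/idP => [H|H].
  have : within e 1 x y by rewrite -dist_le (eqP H).
  rewrite /= => /orP[/eqP exy|/existsP[z /andP[/eqP <- //]]].
  by move: H; rewrite exy distxx.
rewrite eqn_leq dist_le.
have -> : within e 1 x y.
  rewrite /=; apply/orP; right; apply/existsP; exists x; by rewrite eqxx.
rewrite /= lt0n dist0; apply/negP => /eqP exy.
by move: H; rewrite exy (proj2 Hs y).
Qed.

Lemma dist_tri_r x y z : e y z -> dist e x z <= (dist e x y).+1.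
Proof using Hs Hc.
move=> eyz; rewrite dist_le /=; apply/orP; right; apply/existsP; exists y.
by rewrite eyz -dist_le leqnn.
Qed.

Lemma dist_tri_l x w y : e x w -> dist e x y <= (dist e w y).+1.
Proof using Hs Hc. move=> exw; rewrite dist_le; apply: within_lstep exw _; by rewrite -dist_le. Qed.

Lemma dist_geo x y n : dist e x y = n.+1 -> exists z, e z y /\ dist e x z = n.
Proof using Hs Hc.
move=> H.
have : within e n.+1 x y by rewrite -dist_le H.
rewrite /= => /orP[h|/existsP[z /andP[h1 h2]]].
  by move: h; rewrite -dist_le H ltnn.
exists z; split => //.
have := dist_tri_r x h2; rewrite -dist_le in h1. lia.
Qed.

Lemma dist_geo_l x y n : dist e x y = n.+1 -> exists z, e x z /\ dist e z y = n.
Proof using Hs Hc.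
rewrite dist_sym => /dist_geo[z [h1 h2]]; exists z; split.
  by rewrite (proj1 Hs).
by rewrite dist_sym.
Qed.

Lemma dist_down x y m : dist e x y = m -> forall n, n <= m -> exists z, dist e x z = n.
Proof using Hs Hc.
elim: m y => [|m IH] y H n hn.
  exists y; move: hn; rewrite leqn0 => /eqP ->; exact H.
move: hn; rewrite leq_eqVlt => /orP[/eqP ->|hn]; first by exists y.
have [z [_ hz]] := dist_geo H; exact: IH hz n hn.
Qed.

End G.


Section DRG.
#[local] Set Default Proof Using "All".
Variables (V : finType) (e : rel V) (D : nat) (c a b : nat -> nat).
Hypotheses (Hs : simple_graph e) (Hc : connected_graph e)
  (Hdr : distance_regular e c a b) (HD : D = diameter e) (HD1 : 0 < D).

Lemma Vne : exists x : V, true.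
Proof.
case: (pickP (@predT V)) => [x _|h]; first by exists x.
move: HD1; rewrite HD /diameter big_pred0 //.
Qed.

Lemma diam_ub x y : dist e x y <= D.
Proof.
rewrite HD /diameter; apply: leq_trans (leq_bigmax x).
exact: (leq_bigmax (F := fun y => dist e x y) y).
Qed.

Lemma diam_att : exists x y, dist e x y = D.
Proof.
have [x0 _] := Vne.
have h0 : 0 < #|V| by apply/card_gt0P; exists x0.
have [x hx] := bigop.eq_bigmax (fun x => \max_(y : V) dist e x y) h0.
have [y hy] := bigop.eq_bigmax (fun y => dist e x y) h0.
exists x, y; by rewrite HD /diameter hx hy.
Qed.

Lemma pair_at i : i <= D -> exists x y, dist e x y = i.
Proof.
move=> hi; have [x [y hxy]] := diam_att.
have [z hz] := dist_down Hs Hc hxy hi; by exists x, z.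
Qed.

Lemma partition x y :
  c (dist e x y) + a (dist e x y) + b (dist e x y) = #|[set z | e x z]|.
Proof.
have [h1 h2 h3] := Hdr x y.
rewrite -h1 -h2 -h3.
set d := dist e x y.
set N := [set z | e x z].
set B1 := [set z | (dist e z y).+1 == d].
set B2 := [set z | dist e z y == d].
rewrite -(cardsID B1 N) -(cardsID B2 (N :\: B1)) addnA.
have hz : forall z, e x z -> (d <= (dist e z y).+1) && (dist e z y <= d.+1).
  move=> z exz; rewrite (dist_tri_l Hs Hc _ exz) /=.
  apply: (dist_tri_l Hs Hc); by rewrite (proj1 Hs).
congr (_ + _ + _); apply: eq_card => z; rewrite !inE;
  case exz: (e x z); rewrite ?andbF ?andbT ?andFb //=; move: (hz z exz);
  case: (ltngtP (dist e z y) d) => h; rewrite ?eqxx /=; lia.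
Qed.

Lemma deg x : #|[set z | e x z]| = b 0.
Proof.
rewrite -(partition x x) (distxx Hs Hc).
have [h1 h2 h3] := Hdr x x; rewrite (distxx Hs Hc) in h1 h2 h3.
have -> : c 0 = 0.
  rewrite -h1; apply/eqP; rewrite cards_eq0; apply/eqP/setP => z; by rewrite !inE andbF.
have -> : a 0 = 0.
  rewrite -h2; apply/eqP; rewrite cards_eq0; apply/eqP/setP => z; rewrite !inE (dist0 Hs Hc).
  by apply/negbTE/andP => -[h /eqP hz]; move: h; rewrite hz (proj2 Hs).
done.
Qed.

Lemma sum_k i : i <= D -> c i + a i + b i = b 0.
Proof. move=> /pair_at[x [y <-]]; by rewrite partition deg. Qed.

Lemma c0 : c 0 = 0.
Proof.
have [x [y h]] := pair_at (leq0n D).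
have [h1 _ _] := Hdr x y; rewrite h in h1; rewrite -h1.
apply/eqP; rewrite cards_eq0; apply/eqP/setP => z; by rewrite !inE andbF.
Qed.

Lemma a0 : a 0 = 0.
Proof.
have [x [y h]] := pair_at (leq0n D).
have [_ h2 _] := Hdr x y; rewrite h in h2; rewrite -h2.
move/eqP: h; rewrite (dist0 Hs Hc) => /eqP <-.
apply/eqP; rewrite cards_eq0; apply/eqP/setP => z; rewrite !inE (dist0 Hs Hc).
by apply/negbTE/andP => -[h /eqP hz]; move: h; rewrite hz (proj2 Hs).
Qed.

Lemma c1 : c 1 = 1.
Proof.
have [x [y h]] := pair_at HD1.
have [h1 _ _] := Hdr x y; rewrite h in h1; rewrite -h1.
have exy : e x y by rewrite -(dist1 Hs Hc) h.
transitivity #|[set y]|; last exact: cards1. apply: eq_card => z; rewrite !inE -(dist0 Hs Hc z y) /=.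
case hz: (dist e z y) => [|n] /=; last by rewrite andbF.
rewrite andbT; move/eqP: hz; rewrite (dist0 Hs Hc) => /eqP ->; exact exy.
Qed.

Lemma c_pos i : 0 < i <= D -> 0 < c i.
Proof.
case: i => // i /= hi; have [x [y h]] := pair_at hi.
have [h1 _ _] := Hdr x y; rewrite h in h1; rewrite -h1.
have [z [exz hz]] := dist_geo_l Hs Hc h.
apply/card_gt0P; exists z; by rewrite !inE exz hz eqxx.
Qed.

Lemma b_pos i : i < D -> 0 < b i.
Proof.
move=> hi; have [x [y h]] := pair_at hi.
have [z [ezy hz]] := dist_geo Hs Hc h.
have [_ _ h3] := Hdr z x; rewrite (dist_sym Hs Hc z x) hz in h3; rewrite -h3.
apply/card_gt0P; exists y; by rewrite !inE ezy (dist_sym Hs Hc y x) h eqxx.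
Qed.

Lemma a_pos i : a 1 <> 0 -> 0 < i < D -> 0 < a i.
Proof.
move=> ha1 /andP[i0 hi]; have [x0 [y h]] := pair_at hi.
have [x1 [ex01 h1]] := dist_geo_l Hs Hc h.
have h1' : dist e y x1 = i.-1.+1 by rewrite (dist_sym Hs Hc) h1; lia.
have [xi [exi hi1]] := dist_geo_l Hs Hc h1'.
have sym := dist_sym Hs Hc.
have e10 : e x1 x0 by rewrite (proj1 Hs).
have hxi0 : dist e xi x0 = i.
  have H1 := dist_tri_r Hs Hc xi e10.
  have H2 := dist_tri_l Hs Hc x0 exi.
  rewrite (sym y x0) h in H2. lia.
have [t ht] : exists t, t \in [set z | e x0 z & dist e z x1 == dist e x0 x1].
  apply/card_gt0P; have [_ h2 _] := Hdr x0 x1; rewrite h2.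
  have -> : dist e x0 x1 = 1 by apply/eqP; rewrite (dist1 Hs Hc).
  by rewrite lt0n; apply/eqP.
move: ht; rewrite !inE => /andP[e0t].
have -> : dist e x0 x1 = 1 by apply/eqP; rewrite (dist1 Hs Hc).
rewrite (dist1 Hs Hc) => et1.
have A1 := dist_tri_l Hs Hc xi et1.
have A2 := dist_tri_l Hs Hc xi e0t.
rewrite (sym x1 xi) hi1 (sym x0 xi) hxi0 in A1 A2.
have [B|B] : dist e t xi = i \/ dist e t xi = i.-1 by lia.
  have [_ h2 _] := Hdr x0 xi; rewrite (sym x0 xi) hxi0 in h2; rewrite -h2.
  apply/card_gt0P; exists t; by rewrite !inE e0t B eqxx.
have exi' : e xi y by rewrite (proj1 Hs).
have C1 := dist_tri_r Hs Hc t exi'.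
have C2 := dist_tri_l Hs Hc y e0t.
rewrite B in C1; rewrite h in C2.
have [_ h2 _] := Hdr x1 y; rewrite h1 in h2; rewrite -h2.
apply/card_gt0P; exists t; rewrite !inE (proj1 Hs x1 t) et1 /=.
apply/eqP; lia.
Qed.
End DRG.

Local Open Scope ring_scope.

Section Alg.
Variable R : realFieldType.
Implicit Types x y z s t e k a b c r : R.

Definition gA' s t e : R := (e - 1) * (1 - t) / ((s ^+ 2 - t) * (1 - e * s)).
Definition hB' s t e : R := (1 - s) * (1 - t) / ((s ^+ 2 - t) * (1 - e * s)).
Definition kf s t e : R := (1 - t) * (e - s) / ((s ^+ 2 - t) * (1 - e * s)).

Lemma alg_B x y z s t e k a b c :
  z - y != 0 -> x - y != 0 -> s ^+ 2 - t != 0 -> 1 - e * s != 0 ->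
  a = gA' s t e * ((z - s * y) * (x - s * y)) / ((z - y) * (x - y)) ->
  k = kf s t e -> c = k - a - b ->
  (c * x + a * y + b * z = k * s * y) <->
  b * (x - z) = hB' s t e * ((x - s * y) * (z - e * y)) / (z - y).
Proof.
move=> h1 h2 h3 h4 ha hk hc; rewrite hc.
have E : (k - a - b) * x + a * y + b * z - k * s * y =
   (hB' s t e * ((x - s * y) * (z - e * y)) / (z - y)) - b * (x - z).
  rewrite hk ha /gA' /hB' /kf; field; by rewrite h1 h2 h3 h4.
split => H.
  by apply/eqP; rewrite eq_sym -subr_eq0 -E H subrr.
by apply/eqP; rewrite -subr_eq0 E H subrr.
Qed.


Lemma alg_C x y z s t e k a b c :
  z - y != 0 -> x - y != 0 -> s ^+ 2 - t != 0 -> 1 - e * s != 0 ->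
  a = gA' s t e * ((z - s * y) * (x - s * y)) / ((z - y) * (x - y)) ->
  k = kf s t e -> b = k - a - c ->
  (c * x + a * y + b * z = k * s * y) <->
  c * (z - x) = hB' s t e * ((z - s * y) * (x - e * y)) / (x - y).
Proof.
move=> h1 h2 h3 h4 ha hk hc; rewrite hc.
have E : c * x + a * y + (k - a - c) * z - k * s * y =
   hB' s t e * ((z - s * y) * (x - e * y)) / (x - y) - c * (z - x).
  rewrite hk ha /gA' /hB' /kf; field; by rewrite h1 h2 h3 h4.
split => H.
  by apply/eqP; rewrite eq_sym -subr_eq0 -E H subrr.
by apply/eqP; rewrite -subr_eq0 E H subrr.
Qed.

Lemma from_eq (L Rr P l : R) : L = Rr -> P = l * (L - Rr) -> P = 0.
Proof. by move=> -> ->; rewrite subrr mulr0. Qed.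

Lemma alg_k_rec1 s t e k a b :
  1 - s != 0 -> t - s != 0 -> s ^+ 2 - t != 0 -> 1 - e * s != 0 ->
  a = gA' s t e * ((t - s * s) * (1 - s * s)) / ((t - s) * (1 - s)) ->
  1 * 1 + a * s + b * t = k * s * s -> k = 1 + a + b -> k = kf s t e.
Proof.
move=> h1 h2 h3 h4 ha hr hk.
have L : k * (t - s ^+ 2) - ((t - 1) + a * (t - s)) = 0.
  apply: (from_eq hr (l := 1)); rewrite hk; ring.
have hts : t - s ^+ 2 != 0 by rewrite -oppr_eq0 opprB.
have -> : k = ((t - 1) + a * (t - s)) / (t - s ^+ 2).
  by move/eqP: L; rewrite subr_eq0 => /eqP <-; rewrite mulfK.
rewrite ha /gA' /kf; field; by rewrite h1 h2 h3 h4 hts.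
Qed.

Lemma alg_k_B1 s t e k a b :
  1 - s != 0 -> t - s != 0 -> s ^+ 2 - t != 0 -> 1 - e * s != 0 -> 1 - t != 0 ->
  a = gA' s t e * ((t - s * s) * (1 - s * s)) / ((t - s) * (1 - s)) ->
  b * (1 - t) = hB' s t e * ((1 - s * s) * (t - e * s)) / (t - s) ->
  k = 1 + a + b -> k = kf s t e.
Proof.
move=> h1 h2 h3 h4 h5 ha hb hk; rewrite hk.
have -> : b = hB' s t e * ((1 - s * s) * (t - e * s)) / (t - s) / (1 - t).
  by rewrite -hb mulfK.
rewrite ha /gA' /hB' /kf; field; by rewrite h1 h2 h3 h4 h5.
Qed.

Definition R1e x y z e k a b c r : R :=
  (z - e * y) * (c * (y - e * x) + a * (x - e * y)) + b * (x - e * y) * (y - e * z)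
  - k * r * (x - e * y) * (z - e * y).

Lemma alg_R1 x y z s t e k a b c r :
  z - y != 0 -> x - y != 0 -> s ^+ 2 - t != 0 -> 1 - e * s != 0 -> s - e != 0 ->
  a = gA' s t e * ((z - s * y) * (x - s * y)) / ((z - y) * (x - y)) ->
  b * (x - z) = hB' s t e * ((x - s * y) * (z - e * y)) / (z - y) ->
  k = kf s t e -> c = k - a - b -> r = (1 - e * s) / (s - e) ->
  R1e x y z e k a b c r = 0.
Proof.
move=> h1 h2 h3 h4 h5 ha hb hk hc hr.
have -> : R1e x y z e k a b c r =
  (z - e * y) * ((k - a) * (y - e * x) + a * (x - e * y) - k * r * (x - e * y))
  + (1 - e ^+ 2) * y * (b * (x - z)).
  rewrite /R1e hc; ring.
rewrite hb hr hk ha /gA' /hB' /kf; field; by rewrite h1 h2 h3 h4 h5.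
Qed.

Lemma alg_Fa x y z s e k a b c r :
  R1e x y z e k a b c r = 0 -> c * x + a * y + b * z = k * s * y ->
  c = k - a - b -> r * (s - e) = 1 - e * s -> 1 + e != 0 ->
  a * (x - y) * (z - y) * (s - e) = k * (1 - e) * (z - s * y) * (x - s * y).
Proof.
move=> hR hS hc hr he.
apply/eqP; rewrite -subr_eq0; apply/eqP.
apply: (mulfI he); rewrite mulr0.
have E : (1 + e) * (a * (x - y) * (z - y) * (s - e) - k * (1 - e) * (z - s * y) * (x - s * y))
  = (s - e) * (R1e x y z e k a b c r + (1 - e ^+ 2) * y * (c * x + a * y + b * z - k * s * y))
    + k * (x - e * y) * (z - e * y) * (r * (s - e) - (1 - e * s)).
  rewrite /R1e hc; ring.
by rewrite E hR hS hr !subrr !mulr0 !addr0 mulr0.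
Qed.

Lemma alg_k_Fa1 s t e k a :
  1 - s != 0 -> t - s != 0 -> s ^+ 2 - t != 0 -> 1 - e * s != 0 -> s - e != 0 ->
  k * (t - s ^+ 2) = (t - 1) + a * (t - s) ->
  a * (1 - s) * (t - s) * (s - e) = k * (1 - e) * (t - s * s) * (1 - s * s) ->
  k = kf s t e.
Proof.
move=> h1 h2 h3 h4 h5 hl hf.
have E : k * ((t - s ^+ 2) * (1 - s) * (e * s - 1)) = (t - 1) * (1 - s) * (s - e).
  apply/eqP; rewrite -subr_eq0; apply/eqP.
  have -> : k * ((t - s ^+ 2) * (1 - s) * (e * s - 1)) - (t - 1) * (1 - s) * (s - e) =
     (1 - s) * (s - e) * (k * (t - s ^+ 2) - ((t - 1) + a * (t - s)))
     + (a * (1 - s) * (t - s) * (s - e) - k * (1 - e) * (t - s * s) * (1 - s * s)) by ring.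
  by rewrite hl hf !subrr mulr0 addr0.
have hts : t - s ^+ 2 != 0 by rewrite -oppr_eq0 opprB.
have he1 : e * s - 1 != 0 by rewrite -oppr_eq0 opprB.
have hne : (t - s ^+ 2) * (1 - s) * (e * s - 1) != 0 by rewrite !mulf_neq0.
have -> : k = (t - 1) * (1 - s) * (s - e) / ((t - s ^+ 2) * (1 - s) * (e * s - 1)).
  by rewrite -E mulfK.
rewrite /kf; field; by rewrite h1 h3 h4 hts he1.
Qed.

Lemma alg_a_Fa x y z s t e k a :
  z - y != 0 -> x - y != 0 -> s ^+ 2 - t != 0 -> 1 - e * s != 0 -> s - e != 0 ->
  a * (x - y) * (z - y) * (s - e) = k * (1 - e) * (z - s * y) * (x - s * y) ->
  k = kf s t e ->
  a = gA' s t e * ((z - s * y) * (x - s * y)) / ((z - y) * (x - y)).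
Proof.
move=> h1 h2 h3 h4 h5 hf hk.
have hne : (x - y) * (z - y) * (s - e) != 0 by rewrite !mulf_neq0.
have -> : a = k * (1 - e) * (z - s * y) * (x - s * y) / ((x - y) * (z - y) * (s - e)).
  rewrite -hf; field; by rewrite h1 h2 h5.
rewrite hk /gA' /kf; field; by rewrite h1 h2 h3 h4 h5.
Qed.

End Alg.


Section Main.
#[local] Set Default Proof Using "All".
Variables (R : realFieldType) (D : nat) (c a b : nat -> nat).
Hypotheses (HD3 : (3 <= D)%N)
  (Hsum : forall i, (i <= D)%N -> (c i + a i + b i = b 0)%N)
  (Hc0 : c 0%N = 0%N) (Ha0 : a 0%N = 0%N) (Hc1 : c 1%N = 1%N)
  (Hcp : forall i, (0 < i <= D)%N -> (0 < c i)%N)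
  (Hbp : forall i, (i < D)%N -> (0 < b i)%N)
  (Hap : forall i, (0 < i < D)%N -> (0 < a i)%N).

Ltac slia := repeat match goal with
  | H : is_true (leq _ _) |- _ => lazymatch H with HD3 => fail | _ => revert H end
  | H : is_true (andb (leq _ _) (leq _ _)) |- _ => revert H end; clear -HD3; lia.

Local Notation k := ((b 0%N)%:R : R).

Lemma cR i : (i <= D)%N -> (c i)%:R = k - (a i)%:R - (b i)%:R :> R.
Proof. move=> h; rewrite -(Hsum h) !natrD; ring. Qed.

Lemma bR i : (i <= D)%N -> (b i)%:R = k - (a i)%:R - (c i)%:R :> R.
Proof. move=> h; rewrite -(Hsum h) !natrD; ring. Qed.

Lemma kR1 : k = 1 + (a 1%N)%:R + (b 1%N)%:R.
Proof. rewrite -(Hsum (i:=1%N)) ?Hc1 ?natrD //; lia. Qed.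

Lemma k_gt0 : 0 < k.
Proof. rewrite ltr0n; apply: Hbp; lia. Qed.

Lemma k_neq0 : k != 0.
Proof. by rewrite gt_eqF // k_gt0. Qed.

Lemma b_neq0 i : (i < D)%N -> (b i)%:R != 0 :> R.
Proof. by move=> /Hbp h; rewrite pnatr_eq0 -lt0n. Qed.

Lemma c_neq0 i : (0 < i <= D)%N -> (c i)%:R != 0 :> R.
Proof. by move=> /Hcp h; rewrite pnatr_eq0 -lt0n. Qed.

Lemma a_neq0 i : (0 < i < D)%N -> (a i)%:R != 0 :> R.
Proof. by move=> /Hap h; rewrite pnatr_eq0 -lt0n. Qed.

Definition recs (u : nat -> R) i :=
  (c i)%:R * u i.-1 + (a i)%:R * u i + (b i)%:R * u i.+1 = k * u 1%N * u i.

Lemma pcsE u : pcs D c a b u <-> u 0%N = 1 /\ forall i, (0 < i < D)%N -> recs u i.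
Proof.
split.
  case=> th [h0 hr]; split => // i hi.
  have e0 := hr 0%N ltac:(lia).
  rewrite /= Hc0 Ha0 h0 in e0.
  have eth : th = k * u 1%N by rewrite -[th]mulr1 -e0; ring.
  rewrite /recs -eth; apply: hr; lia.
case=> h0 hr; exists (k * u 1%N); split => // i hi.
case: i hi => [|i] hi.
  rewrite /= Hc0 Ha0 h0; ring.
by apply: hr; lia.
Qed.

Section ABC.
Variables (s : nat -> R) (eps : R).
Hypothesis (Hs0 : s 0%N = 1).

Lemma condA_basic : condA D a s eps ->
  [/\ 1 - s 1%N != 0, s 2%N - s 1%N != 0, 1 - s 2%N != 0, eps - 1 != 0 &
   (a 1%N)%:R = gA' (s 1%N) (s 2%N) eps * ((s 2%N - s 1%N * s 1%N) * (1 - s 1%N * s 1%N))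
       / ((s 2%N - s 1%N) * (1 - s 1%N))].
Proof.
case=> _ h2 h3 hA; have [hz hx ha] := hA 1%N ltac:(lia).
rewrite /= Hs0 in hz hx ha.
have ha1 := a_neq0 (i := 1%N) ltac:(lia).
have hg : gA s eps != 0.
  by apply/negP => /eqP hg; move: ha1; rewrite ha hg !mul0r eqxx.
have ht : 1 - s 2%N != 0.
  by apply/negP => /eqP ht; move: hg; rewrite /gA ht mulr0 mul0r eqxx.
have he : eps - 1 != 0.
  by apply/negP => /eqP he; move: hg; rewrite /gA he !mul0r eqxx.
by split.
Qed.

Lemma k_of_pcs : condA D a s eps -> recs s 1%N -> k = kf (s 1%N) (s 2%N) eps.
Proof.
move=> hA hr; have [h1 h2 _ _ ha] := condA_basic hA.
case: hA => _ h3 h4 _.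
apply: (alg_k_rec1 h1 h2 h3 h4 ha _ kR1).
by move: hr; rewrite /recs /= Hs0 Hc1.
Qed.

Lemma k_of_B : condA D a s eps -> condB D b s eps -> k = kf (s 1%N) (s 2%N) eps.
Proof.
move=> hA [_ _ hB]; have [h1 h2 h5 _ ha] := condA_basic hA.
case: hA => _ h3 h4 _.
have [_ hb] := hB 1%N ltac:(lia); rewrite /= Hs0 in hb.
exact: (alg_k_B1 h1 h2 h3 h4 h5 ha hb kR1).
Qed.

Lemma k_of_C : condC D c b s eps -> k = kf (s 1%N) (s 2%N) eps.
Proof.
case=> h3 h4 h1 hk _; rewrite hk /hB /kf; field; by rewrite h1 h3 h4.
Qed.

Lemma rec_iff_B i : condA D a s eps -> k = kf (s 1%N) (s 2%N) eps -> (0 < i < D)%N ->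
  recs s i <->
  (b i)%:R * (s i.-1 - s i.+1) = hB s eps *
          ((s i.-1 - s 1%N * s i) * (s i.+1 - eps * s i)) / (s i.+1 - s i).
Proof.
move=> [_ h3 h4 hA] hk hi; have [hz hx ha] := hA i ltac:(lia).
apply: (alg_B hz hx h3 h4 ha hk).
by rewrite cR //; lia.
Qed.

Lemma rec_iff_C i : condA D a s eps -> k = kf (s 1%N) (s 2%N) eps -> (0 < i < D)%N ->
  recs s i <->
  (c i)%:R * (s i.+1 - s i.-1) = hB s eps *
          ((s i.+1 - s 1%N * s i) * (s i.-1 - eps * s i)) / (s i.-1 - s i).
Proof.
move=> [_ h3 h4 hA] hk hi; have [hz hx ha] := hA i ltac:(lia).
apply: (alg_C hz hx h3 h4 ha hk).
by rewrite bR //; lia.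
Qed.

Lemma ii_iii : (nontrivial_pcs D c a b s /\ condA D a s eps) <-> (condA D a s eps /\ condB D b s eps).
Proof.
split.
  case=> [[/pcsE [_ hr] _] hA]; split => //.
  have hk := k_of_pcs hA (hr 1%N ltac:(slia)).
  have hA' := hA; case: hA' => _ h3 h4 hA'.
  split => // i hi; have [hz _ _] := hA' i hi; split => //.
  apply/(rec_iff_B hA hk); [lia | apply: hr; lia].
case=> hA hB; split => //.
have hk := k_of_B hA hB.
have [h1 _ _ _ _] := condA_basic hA.
split; last by apply/negP => /eqP e1; move: h1; rewrite e1 subrr eqxx.
apply/pcsE; split => // i hi.
case: hB => _ _ hB; have [_ hb] := hB i ltac:(slia).
by apply/(rec_iff_B hA hk hi).
Qed.

Lemma iii_iv : (condA D a s eps /\ condB D b s eps) <-> (condA D a s eps /\ condC D c b s eps).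
Proof.
split.
  case=> hA hB; split => //.
  have hk := k_of_B hA hB.
  have [h1 _ _ _ _] := condA_basic hA.
  have hA' := hA; case: hA' => _ h3 h4 hA'.
  have h1' : s 1%N - 1 != 0 by rewrite -oppr_eq0 opprB.
  split => //.
    rewrite hk /Defs.hB /kf; field; by rewrite h1' h3 h4.
  move=> i hi; have [_ hx _] := hA' i hi; split => //.
  case: hB => _ _ hB; have [_ hb] := hB i hi.
  apply/(rec_iff_C hA hk); first lia.
  by apply/(rec_iff_B hA hk); first lia.
case=> hA hC; split => //.
have hk := k_of_C hC.
have hA' := hA; case: hA' => _ h3 h4 hA'.
split => // i hi; have [hz _ _] := hA' i hi; split => //.
case: hC => _ _ _ _ hC; have [_ hc] := hC i hi.
apply/(rec_iff_B hA hk); first lia.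
by apply/(rec_iff_C hA hk); first lia.
Qed.


Fixpoint rpair (rho : R) (n : nat) : R * R :=
  match n with
  | 0 => (1, rho)
  | n'.+1 => let pq := rpair rho n' in
     (pq.2, (k * rho * pq.2 - (c n)%:R * pq.1 - (a n)%:R * pq.2) / (b n)%:R)
  end.
Definition rseq rho n := (rpair rho n).1.

Lemma rseqS rho n : rseq rho n.+2 =
  (k * rho * rseq rho n.+1 - (c n.+1)%:R * rseq rho n - (a n.+1)%:R * rseq rho n.+1)
   / (b n.+1)%:R.
Proof. by []. Qed.

Lemma ii_i : (nontrivial_pcs D c a b s /\ condA D a s eps) -> tight_with_aux D c a b s eps.
Proof.
case=> hns hA; have hns' := hns; case: hns' => /pcsE[_ hr] hn1.
have [h1 h2 h5 he1 ha1] := condA_basic hA.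
have hk := k_of_pcs hA (hr 1%N ltac:(slia)).
have hA' := hA; case: hA' => hem h3 h4 hA'.
set sg := s 1%N in h1 h2 h3 h4 ha1 hk hn1.
have hse : sg - eps != 0.
  apply/negP => /eqP hse; move: k_neq0; rewrite hk /kf.
  have -> : eps - sg = 0 by rewrite -opprB hse oppr0.
  by rewrite mulr0 mul0r eqxx.
have hem' : 1 + eps != 0 by rewrite addrC addr_eq0.
set rho := (1 - eps * sg) / (sg - eps).
have hrho : rho * (sg - eps) = 1 - eps * sg by rewrite /rho mulfVK.
have hrho1 : rho != 1.
  apply/negP => /eqP e1; move: hrho; rewrite e1 mul1r => /eqP; rewrite -subr_eq0.
  have -> : sg - eps - (1 - eps * sg) = - ((1 + eps) * (1 - sg)) by ring.
  by rewrite oppr_eq0 mulf_eq0 (negbTE hem') (negbTE h1).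
set r := rseq rho.
have hr0 : r 0%N = 1 by [].
have hr1 : r 1%N = rho by [].
have hrr : forall i, (0 < i < D)%N -> recs r i.
  case=> [|i] hi; first by slia.
  rewrite /recs hr1 /r rseqS /= -/r.
  have hb := b_neq0 (i := i.+1) ltac:(slia).
  field; exact: hb.
clearbody r.
have F : forall i, (0 < i < D)%N ->
   [/\ s i.+1 - s i != 0, s i.-1 - s i != 0,
    (a i)%:R = gA' sg (s 2%N) eps * ((s i.+1 - sg * s i) * (s i.-1 - sg * s i))
          / ((s i.+1 - s i) * (s i.-1 - s i)),
    (b i)%:R * (s i.-1 - s i.+1) = hB' sg (s 2%N) eps *
          ((s i.-1 - sg * s i) * (s i.+1 - eps * s i)) / (s i.+1 - s i) &
    (c i)%:R * (s i.+1 - s i.-1) = hB' sg (s 2%N) eps *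
          ((s i.+1 - sg * s i) * (s i.-1 - eps * s i)) / (s i.-1 - s i)].
  move=> i hi; have [hz hx ha] := hA' i ltac:(slia).
  split => //.
    by apply/(rec_iff_B hA hk hi); apply: hr.
  by apply/(rec_iff_C hA hk hi); apply: hr.
have haux : forall i, (0 < i <= D)%N ->
    r i * (s i - eps * s i.-1) = r i.-1 * (s i.-1 - eps * s i).
  elim=> [|i IH] hi; first by slia.
  case: (posnP i) => [->|i0].
    by rewrite hr1 hr0 /= Hs0 mul1r mulr1 hrho.
  have {}IH := IH ltac:(slia).
  have hiD : (0 < i < D)%N by slia.
  have [hz hx ha hb hc] := F i hiD.
  have hR1 := alg_R1 hz hx h3 h4 hse ha hb hk (cR (i := i) ltac:(slia)) (erefl rho).
  have hrec := hrr i hiD; rewrite /recs hr1 in hrec.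
  have hbi := b_neq0 (i := i) ltac:(slia).
  rewrite [i.+1.-1]/=.
  set x := s i.-1 in hx ha hb hc hR1 IH hrec *.
  set y := s i in hz hx ha hb hc hR1 IH hrec *.
  set z := s i.+1 in hz ha hb hc hR1 hrec *.
  set p := r i.-1 in IH hrec *.
  set q := r i in IH hrec *.
  set w := r i.+1 in hrec *.
  set A := (a i)%:R in ha hR1 hrec *.
  set B := (b i)%:R in hb hR1 hrec hbi *.
  set C := (c i)%:R in hc hR1 hrec *.
  have E : (x - eps * y) * B * (w * (z - eps * y) - q * (y - eps * z)) =
      - q * R1e x y z eps k A B C rho
      + (x - eps * y) * (z - eps * y) * ((C * p + A * q + B * w) - k * rho * q)
      - C * (z - eps * y) * (p * (x - eps * y) - q * (y - eps * x)).
    rewrite /R1e; ring.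
  rewrite hR1 hrec IH !subrr !mulr0 oppr0 ?mul0r ?addr0 ?subr0 in E.
  apply/eqP; rewrite -subr_eq0; apply/eqP.
  case: (eqVneq (x - eps * y) 0) => hbeta; last first.
    by move/eqP: E; rewrite !mulf_eq0 (negbTE hbeta) (negbTE hbi) /= => /eqP.
  have hy : y != 0.
    apply/negP => /eqP y0; move: hbeta; rewrite y0 mulr0 subr0 => x0.
    by move: hx; rewrite x0 y0 subrr eqxx.
  have hq : q = 0.
    move: IH; rewrite hbeta mulr0.
    have -> : y - eps * x = y * ((1 + eps) * (1 - eps)).
      have -> : x = eps * y by apply/eqP; rewrite -subr_eq0 hbeta.
      ring.
    move/eqP; rewrite !mulf_eq0 (negbTE hy) (negbTE hem') /=.
    have -> : (1 - eps == 0) = false.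
      by apply/negbTE; rewrite -oppr_eq0 opprB.
    by rewrite orbF => /eqP.
  have hzx : z - eps * y = 0.
    move: hc; rewrite hbeta !mulr0 mul0r => /eqP.
    rewrite mulf_eq0 (negbTE (c_neq0 (i := i) ltac:(slia))) /= subr_eq0 => /eqP zx.
    by rewrite zx hbeta.
  by rewrite hq hzx !mul0r mulr0 subrr.
have hpi : forall i, (0 < i < D)%N -> recs (fun j => s j * r j) i.
  move=> i hi; rewrite /recs /= hr1.
  have hA1 := haux i ltac:(slia).
  have hA2 := haux i.+1 ltac:(slia).
  have haux1 := haux 1%N ltac:(slia); rewrite /= hr0 hr1 Hs0 in haux1.
  have hrs := hr i hi; have hrr' := hrr i hi; rewrite /recs hr1 in hrs hrr'.
  have hC := cR (i := i) ltac:(slia).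
  rewrite /= in hA2.
  set x := s i.-1 in hA1 hrs hrr' *.
  set y := s i in hA1 hA2 hrs hrr' *.
  set z := s i.+1 in hA2 hrs hrr' *.
  set p := r i.-1 in hA1 hrs hrr' *.
  set q := r i in hA1 hA2 hrs hrr' *.
  set w := r i.+1 in hA2 hrs hrr' *.
  set A := (a i)%:R in hC hrs hrr' *.
  set B := (b i)%:R in hC hrs hrr' *.
  set C := (c i)%:R in hC hrs hrr' *.
  apply/eqP; rewrite -subr_eq0; apply/eqP.
  have E : C * (x * p) + A * (y * q) + B * (z * w) - k * (sg * rho) * (y * q) =
     - C * (q * (y - eps * x) - p * (x - eps * y))
     + B * (w * (z - eps * y) - q * (y - eps * z))
     + eps * y * (C * p + A * q + B * w - k * rho * q)
     - eps * q * (C * x + A * y + B * z - k * sg * y)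
     + y * q * (C - (k - A - B))
     - k * y * q * (rho * (sg - eps) - (1 - eps * sg)).
    ring.
  by rewrite E hA1 hA2 hrs hrr' hC hrho !subrr !mulr0 oppr0 !addr0.
split => //; exists r; split.
- split; last by rewrite hr1.
  by apply/pcsE; split.
- split => //; apply/pcsE; split => //.
  by rewrite /= Hs0 hr0 mulr1.
- move=> i hi; have := haux i hi.
  move/eqP; rewrite -subr_eq0 => /eqP H; apply/eqP; rewrite -subr_eq0; apply/eqP.
  rewrite -H; ring.
Qed.

End ABC.

Lemma mirror (u v : nat -> R) : u 0%N = 1 -> v 0%N = 1 -> u 1%N != 1 ->
  recs u 1 -> recs u 2 -> recs v 1 -> recs v 2 ->
  (forall i, (0 < i <= 3)%N -> (u i - u i.-1) * (v i + v i.-1) = 0) -> False.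
Proof.
move=> hu0 hv0 hu1 ru1 ru2 rv1 rv2 H.
have A1 := a_neq0 (i := 1%N) ltac:(slia).
have A1p : 0 < (a 1%N)%:R :> R by rewrite ltr0n; apply: Hap; slia.
have B1p : 0 < (b 1%N)%:R :> R by rewrite ltr0n; apply: Hbp; slia.
have C2p : 0 < (c 2%N)%:R :> R by rewrite ltr0n; apply: Hcp; slia.
have A2p : 0 <= (a 2%N)%:R :> R by rewrite ler0n.
have hk1 := kR1.
have hk2 : k = (c 2%N)%:R + (a 2%N)%:R + (b 2%N)%:R.
  by rewrite -(Hsum (i := 2%N)) ?natrD //; slia.
have hv1 : v 1%N = -1.
  have := H 1%N ltac:(slia); rewrite /= hu0 => /eqP; rewrite mulf_eq0.
  by rewrite subr_eq0 (negbTE hu1) /= addr_eq0 hv0 => /eqP.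
move: rv1; rewrite /recs /= hv0 hv1 Hc1 => rv1.
have hv2 : 0 < v 2%N - 1.
  have E : (b 1%N)%:R * (v 2%N - 1) = 2 * (a 1%N)%:R.
    apply/eqP; rewrite -subr_eq0; apply/eqP.
    apply: (from_eq rv1 (l := 1)); rewrite hk1; ring.
  have : 0 < (b 1%N)%:R * (v 2%N - 1) by rewrite E mulr_gt0.
  by rewrite pmulr_rgt0.
have hu2 : u 2%N = u 1%N.
  have := H 2%N ltac:(slia); rewrite /= hv1 => /eqP; rewrite mulf_eq0.
  have -> : (v 2%N + -1 == 0) = false by rewrite gt_eqF.
  by rewrite orbF subr_eq0 => /eqP.
move: ru1; rewrite /recs /= hu0 Hc1 hu2 => ru1.
have hu1' : u 1%N != 0.
  apply/negP => /eqP e0; move: ru1; rewrite e0 !mulr0 addr0 mulr1 => /eqP.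
  by rewrite addr0 oner_eq0.
have hu3 : u 3%N != u 2%N.
  apply/negP => /eqP e3; move: ru2; rewrite /recs /= e3 hu2 => /eqP.
  rewrite -subr_eq0.
  have -> : (c 2%N)%:R * u 1%N + (a 2%N)%:R * u 1%N + (b 2%N)%:R * u 1%N - k * u 1%N * u 1%N
     = k * u 1%N * (1 - u 1%N) by rewrite hk2; ring.
  rewrite !mulf_eq0 (negbTE k_neq0) (negbTE hu1') /= subr_eq0 eq_sym.
  by rewrite (negbTE hu1).
have hv3 : v 3%N = - v 2%N.
  have := H 3%N ltac:(slia); rewrite /= => /eqP; rewrite mulf_eq0.
  rewrite subr_eq0 (negbTE hu3) /= addr_eq0 => /eqP //.
move: rv2; rewrite /recs /= hv1 hv3 => rv2.
have E : (v 2%N - 1) * ((c 2%N)%:R + 2 * (a 2%N)%:R) + 2 * (a 2%N)%:R = 0.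
  apply: (from_eq rv2 (l := 1)); rewrite hk2; ring.
have : 0 < (v 2%N - 1) * ((c 2%N)%:R + 2 * (a 2%N)%:R) + 2 * (a 2%N)%:R.
  apply: ltr_wpDr; first by rewrite mulr_ge0 // ler0n.
  by apply: mulr_gt0 => //; apply: ltr_wpDr => //; rewrite mulr_ge0 // ler0n.
by rewrite E ltxx.
Qed.

Lemma nozero (u : nat -> R) : u 0%N = 1 -> (forall i, (0 < i < D)%N -> recs u i) ->
  forall j, (j < D)%N -> u j = 0 -> u j.+1 = 0 -> False.
Proof.
move=> h0 hr; elim=> [|j IH] hj hj0 hj1; first by move: hj0; rewrite h0 => /eqP; rewrite oner_eq0.
apply: (IH ltac:(slia) _ hj0).
have := hr j.+1 ltac:(slia); rewrite /recs /= hj0 hj1 !mulr0 !addr0 => /eqP.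
by rewrite mulf_eq0 (negbTE (c_neq0 (i := j.+1) ltac:(slia))) /= => /eqP.
Qed.

Lemma i_ii (s : nat -> R) (eps : R) :
  tight_with_aux D c a b s eps -> nontrivial_pcs D c a b s /\ condA D a s eps.
Proof.
case=> hns [r [hnr [_ hpr _] hax]]; split => //.
case: hns => /pcsE[hs0 hs] hs1; case: hnr => /pcsE[hr0 hr] hr1.
have haux : forall i, (0 < i <= D)%N ->
    r i * (s i - eps * s i.-1) = r i.-1 * (s i.-1 - eps * s i).
  move=> i hi; have := hax i ltac:(slia) => /eqP; rewrite -subr_eq0 => /eqP H.
  apply/eqP; rewrite -subr_eq0; apply/eqP; rewrite -H; ring.
have haux1 := haux 1%N ltac:(slia); rewrite /= hs0 hr0 mul1r mulr1 in haux1.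
set sg := s 1%N in hs1 haux1 *.
set rho := r 1%N in hr1 haux1 *.
have he1 : eps != 1.
  apply/negP => /eqP e1; apply: (mirror hs0 hr0 hs1 (hs 1%N _) (hs 2%N _) (hr 1%N _) (hr 2%N _)).
  - slia. - slia. - slia. - slia.
  move=> i hi; have := haux i ltac:(slia); rewrite e1 !mul1r => /eqP; rewrite -subr_eq0 => /eqP H.
  rewrite -H; ring.
have hem : eps != -1.
  apply/negP => /eqP e1; apply: (mirror hr0 hs0 hr1 (hr 1%N _) (hr 2%N _) (hs 1%N _) (hs 2%N _)).
  - slia. - slia. - slia. - slia.
  move=> i hi; have := haux i ltac:(slia); rewrite e1 !mulN1r !opprK => /eqP; rewrite -subr_eq0 => /eqP H.
  rewrite -H; ring.
have hem' : 1 + eps != 0 by rewrite addrC addr_eq0.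
have he1' : 1 - eps != 0 by rewrite subr_eq0 eq_sym.
have hse : sg - eps != 0.
  apply/negP => /eqP hse.
  have ee : eps = sg by apply/eqP; rewrite eq_sym -subr_eq0 hse.
  move: haux1; rewrite hse mulr0 ee => /eqP; rewrite eq_sym subr_eq0 => hh.
  have : (1 - sg) * (1 + sg) == 0 by rewrite -subr_eq0 in hh; rewrite -(eqP hh); apply/eqP; ring.
  rewrite mulf_eq0 subr_eq0 eq_sym (negbTE hs1) /= addrC addr_eq0 -ee.
  by rewrite (negbTE hem).
have hR1 : forall i, (0 < i < D)%N ->
    R1e (s i.-1) (s i) (s i.+1) eps k (a i)%:R (b i)%:R (c i)%:R rho = 0.
  move=> i hi.
  have hA1 := haux i ltac:(slia).
  have hA2 := haux i.+1 ltac:(slia); rewrite [i.+1.-1]/= in hA2.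
  have hrec := hr i hi; rewrite /recs -/rho in hrec.
  have hnz := nozero hr0 hr (j := i.-1) ltac:(slia).
  rewrite prednK in hnz; last by slia.
  have hci := c_neq0 (i := i) ltac:(slia).
  set x := s i.-1 in hA1 *.
  set y := s i in hA1 hA2 *.
  set z := s i.+1 in hA2 *.
  set p := r i.-1 in hA1 hrec hnz *.
  set q := r i in hA1 hA2 hrec hnz *.
  set w := r i.+1 in hA2 hrec *.
  set A := (a i)%:R in hrec *.
  set B := (b i)%:R in hrec *.
  set C := (c i)%:R in hrec hci *.
  have E : q * R1e x y z eps k A B C rho =
     (z - eps * y) * (x - eps * y) * (C * p + A * q + B * w - k * rho * q)
     + C * (z - eps * y) * (q * (y - eps * x) - p * (x - eps * y))
     - B * (x - eps * y) * (w * (z - eps * y) - q * (y - eps * z)).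
    rewrite /R1e; ring.
  rewrite hrec hA1 hA2 !subrr !mulr0 !addr0 subrr in E.
  case: (eqVneq q 0) => hq; last first.
    by move/eqP: E; rewrite mulf_eq0 (negbTE hq) /= => /eqP.
  have hp : p != 0 by apply/negP => /eqP hp; apply: hnz.
  have hb0 : x - eps * y = 0.
    move/eqP: hA1; rewrite hq mul0r eq_sym mulf_eq0 (negbTE hp) /= => /eqP //.
  have hz0 : z - eps * y = 0.
    case: (eqVneq (z - eps * y) 0) => // hz0; exfalso.
    move/eqP: hA2; rewrite hq mul0r mulf_eq0 (negbTE hz0) orbF => /eqP w0.
    move: hrec; rewrite hq w0 !mulr0 !addr0 => /eqP; rewrite mulf_eq0 (negbTE hci) /=.
    by rewrite (negbTE hp).
  by rewrite /R1e hb0 hz0 !mulr0 !mul0r !addr0 subrr.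
have hFa : forall i, (0 < i < D)%N ->
    (a i)%:R * (s i.-1 - s i) * (s i.+1 - s i) * (sg - eps) =
    k * (1 - eps) * (s i.+1 - sg * s i) * (s i.-1 - sg * s i).
  move=> i hi; apply: (alg_Fa (hR1 i hi) (hs i hi) _ haux1 hem').
  by rewrite cR //; slia.
have hk0 := k_neq0.
have hs1' : 1 - sg != 0 by rewrite subr_eq0 eq_sym.
have hdist : forall i, (0 < i < D)%N -> s i.-1 - s i != 0 /\ s i.+1 - s i != 0.
  move=> i hi; have hF := hFa i hi; have hrec := hs i hi; rewrite /recs -/sg in hrec.
  have hnz1 := nozero hs0 hs (j := i.-1) ltac:(slia).
  rewrite prednK in hnz1; last by slia.
  have hnz2 := nozero hs0 hs (j := i) ltac:(slia).
  have hC := cR (i := i) ltac:(slia).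
  have Cp : 0 < (c i)%:R :> R by rewrite ltr0n; apply: Hcp; slia.
  have Bp : 0 < (b i)%:R :> R by rewrite ltr0n; apply: Hbp; slia.
  have Ap : 0 <= (a i)%:R :> R by rewrite ler0n.
  set x := s i.-1 in hF hrec hnz1 *.
  set y := s i in hF hrec hnz1 hnz2 *.
  set z := s i.+1 in hF hrec hnz2 *.
  set A := (a i)%:R in hF hrec hC Ap *.
  set B := (b i)%:R in hrec hC Bp *.
  set C := (c i)%:R in hrec hC Cp *.
  have hCA : C + A != 0 by rewrite gt_eqF // ltr_wpDr.
  have hAB : A + B != 0 by rewrite gt_eqF // ltr_wpDl.
  split.
    apply/negP => /eqP hxy.
    have xy : x = y by apply/eqP; rewrite -subr_eq0 hxy.
    suff y0 : y = 0 by apply: hnz1; rewrite ?xy y0.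
    have E1 : (z - sg * y) * y * (k * (1 - eps) * (1 - sg)) = 0.
      have -> : (z - sg * y) * y * (k * (1 - eps) * (1 - sg)) =
         k * (1 - eps) * (z - sg * y) * (x - sg * y) by rewrite xy; ring.
      by rewrite -hF hxy !mulr0 !mul0r.
    move/eqP: E1; rewrite !mulf_eq0 (negbTE hk0) (negbTE he1') (negbTE hs1') !orbF.
    case/orP => [/eqP hz|/eqP //].
    have zz : z = sg * y by apply/eqP; rewrite -subr_eq0 hz.
    have E2 : y * ((C + A) * (1 - sg)) = 0.
      apply: (from_eq hrec (l := 1)); rewrite zz xy hC; ring.
    by move/eqP: E2; rewrite !mulf_eq0 (negbTE hCA) (negbTE hs1') !orbF => /eqP.
  apply/negP => /eqP hzy.
  have zy : z = y by apply/eqP; rewrite -subr_eq0 hzy.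
  suff y0 : y = 0 by apply: hnz2; rewrite ?zy y0.
  have E1 : (x - sg * y) * y * (k * (1 - eps) * (1 - sg)) = 0.
    have -> : (x - sg * y) * y * (k * (1 - eps) * (1 - sg)) =
       k * (1 - eps) * (z - sg * y) * (x - sg * y) by rewrite zy; ring.
    by rewrite -hF hzy !mulr0 !mul0r.
  move/eqP: E1; rewrite !mulf_eq0 (negbTE hk0) (negbTE he1') (negbTE hs1') !orbF.
  case/orP => [/eqP hx|/eqP //].
  have xx : x = sg * y by apply/eqP; rewrite -subr_eq0 hx.
  have E2 : y * ((A + B) * (1 - sg)) = 0.
    apply: (from_eq hrec (l := 1)); rewrite zy xx hC; ring.
  by move/eqP: E2; rewrite !mulf_eq0 (negbTE hAB) (negbTE hs1') !orbF => /eqP.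
have [_ ht] := hdist 1%N ltac:(slia).
have hF1 := hFa 1%N ltac:(slia); rewrite /= hs0 -/sg in hF1.
have hA1 := a_neq0 (i := 1%N) ltac:(slia).
have h3 : sg ^+ 2 - s 2%N != 0.
  apply/negP => /eqP h3; move: hF1.
  have -> : s 2%N - sg * sg = 0 by rewrite -expr2 -opprB h3 oppr0.
  rewrite mulr0 mul0r => /eqP; rewrite !mulf_eq0 (negbTE hA1) (negbTE hs1') (negbTE ht).
  by rewrite (negbTE hse).
have h4 : 1 - eps * sg != 0.
  apply/negP => /eqP h4.
  have rho0 : rho = 0.
    by move/eqP: haux1; rewrite h4 mulf_eq0 (negbTE hse) orbF => /eqP.
  have hr2 : r 2%N != 0.
    apply/negP => /eqP r2; have := hr 1%N ltac:(slia).
    rewrite /recs /= hr0 -/rho rho0 r2 Hc1 !mulr0 !addr0 mulr1 => /eqP.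
    by rewrite oner_eq0.
  have t1 : s 2%N = 1.
    have := haux 2%N ltac:(slia); rewrite /= -/rho -/sg rho0 mul0r => /eqP.
    rewrite mulf_eq0 (negbTE hr2) /= subr_eq0 => /eqP ->.
    by apply/eqP; rewrite eq_sym -subr_eq0 h4.
  have [_ h32] := hdist 2%N ltac:(slia).
  have hF2 := hFa 2%N ltac:(slia); rewrite /= -/sg t1 mulr1 subrr mulr0 in hF2.
  move/eqP: hF2; rewrite !mulf_eq0 (negbTE (a_neq0 (i := 2%N) ltac:(slia))) /=.
  rewrite (negbTE hse) orbF -oppr_eq0 opprB (negbTE hs1') /= => /eqP s3.
  by move: h32; rewrite t1 s3 eqxx.
have hkf : k = kf sg (s 2%N) eps.
  apply: (alg_k_Fa1 hs1' ht h3 h4 hse _ hF1).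
  have := hs 1%N ltac:(slia); rewrite /recs /= hs0 Hc1 -/sg => hrec.
  apply/eqP; rewrite -subr_eq0; apply/eqP.
  apply: (from_eq hrec (l := 1)); rewrite kR1; ring.
split => // i hi.
have hi' : (0 < i < D)%N by slia.
have [hx hz] := hdist i hi'.
split => //.
apply: (alg_a_Fa hz hx h3 h4 hse _ hkf).
have := hFa i hi'; move=> <-; ring.
Qed.
End Main.


Local Open Scope ring_scope.

Theorem theorem14p2 (V : finType) (e : rel V) (D : nat) (c a b : nat -> nat)
    (R : realFieldType) (s : nat -> R) (eps : R) :
  simple_graph e -> connected_graph e ->
  distance_regular e c a b -> D = diameter e -> (3 <= D)%N ->
  a 1%N <> 0%N ->
  s 0%N = 1 ->
  [/\ tight_with_aux D c a b s eps <-> (nontrivial_pcs D c a b s /\ condA D a s eps),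
      (nontrivial_pcs D c a b s /\ condA D a s eps) <-> (condA D a s eps /\ condB D b s eps) &
      (condA D a s eps /\ condB D b s eps) <-> (condA D a s eps /\ condC D c b s eps)].
Proof.
move=> Hs Hc Hdr HD HD3 Ha1 Hs0.
have HD1 : (0 < D)%N by apply: leq_trans HD3.
have Hsum := sum_k Hs Hc Hdr HD HD1.
have Hc0 := c0 Hs Hc Hdr HD HD1.
have Ha0 := a0 Hs Hc Hdr HD HD1.
have Hc1 := c1 Hs Hc Hdr HD HD1.
have Hcp := c_pos Hs Hc Hdr HD HD1.
have Hbp := b_pos Hs Hc Hdr HD HD1.
have Hap : forall i, (0 < i < D)%N -> (0 < a i)%N.
  by move=> i; apply: (a_pos Hs Hc Hdr HD HD1 Ha1).
split.
- split.
    exact: (i_ii HD3 Hsum Hc0 Ha0 Hc1 Hcp Hbp Hap).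
  exact: (ii_i HD3 Hsum Hc0 Ha0 Hc1 Hcp Hbp Hap Hs0).
- exact: (ii_iii HD3 Hsum Hc0 Ha0 Hc1 Hcp Hbp Hap eps Hs0).
- exact: (iii_iv HD3 Hsum Hc0 Ha0 Hc1 Hcp Hbp Hap eps Hs0).
Qed.
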